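(* Let $f$ be a quadratic rational map with critical values $v_1,v_2$ satisfying $f(v_1)=f(v_2)=\beta$, $f(\beta)=\alpha$, $f(\alpha)=\alpha$, with $\alpha\neq\beta$. Then $$[v_1:v_2:\alpha:\beta]\in\{-1,\ 3+2\sqrt2,\ 3-2\sqrt2\}.$$
   Context: For four points $p,q,r,s\in\hat{\mathbb{C}}$ with $p,q,r$ distinct, the cross-ratio $[p:q:r:s]$ is defined as $z(s)$, where $z$ is the unique Möbius transformation with $z(p)=0$, $z(q)=\infty$, $z(r)=1$. *)

(* Defs.v *)
From HB Require Import structures.
From mathcomp Require Import all_boot all_order all_algebra.
From mathcomp Require Import complex.
From mathcomp Require Import Rstruct.
From Stdlib Require Import Reals.
Set Implicit Arguments. Unset Strict Implicit. Unset Printing Implicit Defensive.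
Import Order.TTheory GRing.Theory Num.Theory.
Local Open Scope ring_scope.

Definition CC : Type := (Rdefinitions.R)[i].

(* The Riemann sphere: [Some z] is the finite point z, [None] is infinity. *)
Definition sphere := option CC.

Definition quadratic_map (P Q : {poly CC}) : bool :=
  coprimep P Q && (maxn (size P) (size Q) == 3%N).

Definition rat_eval (P Q : {poly CC}) (z : sphere) : sphere :=
  match z with
  | Some x => if Q.[x] != 0 then Some (P.[x] / Q.[x]) else None
  | None => if Q`_2 != 0 then Some (P`_2 / Q`_2) else None
  end.

(* Criticality at a finite point x, in local charts: if x is not a pole,
   the derivative (P'Q - PQ')/Q^2 of P/Q vanishes at x; if x is a pole,
   the derivative of the chart expression 1/f = Q/P vanishes at x. *)
Definition crit_fin (P Q : {poly CC}) (x : CC) : bool :=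
  if Q.[x] != 0 then (P^`() * Q - P * Q^`()).[x] == 0
  else (Q^`() * P - Q * P^`()).[x] == 0.

(* Coefficient reversal at degree 2: the chart expression of f at infinity,
   w |-> f(1/w), is rev2 P / rev2 Q. *)
Definition rev2 (P : {poly CC}) : {poly CC} := \poly_(i < 3) P`_(2 - i).

Definition is_critical (P Q : {poly CC}) (z : sphere) : bool :=
  match z with
  | Some x => crit_fin P Q x
  | None => crit_fin (rev2 P) (rev2 Q) 0
  end.

Definition mobius (a b c d : CC) (z : sphere) : sphere :=
  match z with
  | Some x => if c * x + d != 0 then Some ((a * x + b) / (c * x + d)) else None
  | None => if c != 0 then Some (a / c) else None
  end.

(* [p:q:r:s] = w : the (unique) Moebius map m with m p = 0, m q = oo,
   m r = 1 sends s to w. Existence forces p, q, r distinct. *)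
Definition cross_ratio_is (p q r s w : sphere) : Prop :=
  exists a b c d : CC, a * d - b * c != 0 /\
    mobius a b c d p = Some 0 /\ mobius a b c d q = None /\
    mobius a b c d r = Some 1 /\ mobius a b c d s = w.

(* Main.v *)
Require Import Defs.
From HB Require Import structures.
From mathcomp Require Import all_boot all_order all_algebra.
From mathcomp Require Import complex.
From mathcomp Require Import Rstruct.
From mathcomp Require Import ring.
Import Order.TTheory GRing.Theory Num.Theory.
Local Open Scope ring_scope.

Lemma poly3 (P : {poly CC}) : (size P <= 3)%N ->
  P = (P`_0)%:P + (P`_1)%:P * 'X + (P`_2)%:P * 'X^2.
Proof.
move=> hs; apply/polyP => i.
rewrite !coefD !coefCM !coefC coefX coefXn.
case: i => [|[|[|i]]] /=; rewrite ?mulr0 ?mulr1 ?addr0 ?add0r //.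
by rewrite nth_default // (leq_trans hs).
Qed.

Lemma horner3 (x : CC) (P : {poly CC}) : (size P <= 3)%N -> P.[x] = P`_0 + P`_1 * x + P`_2 * x^+2.
Proof. move=> h; rewrite [in LHS](poly3 _ h) !hornerE. done. Qed.
Lemma hornerD3 (x : CC) (P : {poly CC}) : (size P <= 3)%N -> (P^`()).[x] = P`_1 + 2 * P`_2 * x.
Proof. move=> h; rewrite [in LHS](poly3 _ h) !derivE !hornerE. ring. Qed.

Definition vec := (CC * CC)%type.
Definition dt (u v : vec) := u.1 * v.2 - u.2 * v.1.
Definition nzv (u : vec) := (u.1 != 0) || (u.2 != 0).
Definition hp (z : sphere) : vec := match z with Some x => (x, 1) | None => (1, 0) end.
Definition ph (P : {poly CC}) (u : vec) := P`_0 * u.2^+2 + P`_1 * u.1 * u.2 + P`_2 * u.1^+2.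
Definition Fh (P Q : {poly CC}) (u : vec) : vec := (ph P u, ph Q u).
Definition Kh (P Q : {poly CC}) (u : vec) :=
  (P`_2*Q`_1 - P`_1*Q`_2)*u.1^+2 + 2*(P`_2*Q`_0 - P`_0*Q`_2)*u.1*u.2 + (P`_1*Q`_0 - P`_0*Q`_1)*u.2^+2.

Lemma ph1 (P : {poly CC}) (x : CC) : (size P <= 3)%N -> ph P (x, 1) = P.[x].
Proof. by move=> h; rewrite horner3 // /ph /=; ring. Qed.

Lemma nzv_hp z : nzv (hp z).
Proof. by case: z => [x|]; rewrite /nzv /= oner_neq0 ?orbT. Qed.

Lemma L_rat (P Q : {poly CC}) (z : sphere) : (size P <= 3)%N -> (size Q <= 3)%N ->
  dt (hp (rat_eval P Q z)) (Fh P Q (hp z)) = 0.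
Proof.
move=> hP hQ; case: z => [x|] /=.
  rewrite /Fh /= !ph1 //.
  case: ifP => [hq|/negbFE/eqP hq]; rewrite /dt /=.
    by rewrite mulfVK ?mul1r ?subrr.
  by rewrite hq; ring.
rewrite /Fh /ph /=.
case: ifP => [hq|/negbFE/eqP hq]; rewrite /dt /=.
  by field.
by rewrite hq; ring.
Qed.

Lemma L_crit (P Q : {poly CC}) (z : sphere) : (size P <= 3)%N -> (size Q <= 3)%N ->
  is_critical P Q z -> Kh P Q (hp z) = 0.
Proof.
move=> hP hQ; case: z => [x|] /=.
  rewrite /crit_fin; case: ifP => _ /eqP; rewrite !hornerE !hornerD3 // !horner3 // /Kh /= => h.
    by rewrite -[RHS]h; ring.
  by apply/eqP; rewrite -oppr_eq0; apply/eqP; rewrite -[RHS]h; ring.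
rewrite /crit_fin /rev2.
case: ifP => _ /eqP; rewrite !hornerE !horner_coef0 !coef_deriv !coef_poly /Kh /= => h.
  by apply/eqP; rewrite -oppr_eq0; apply/eqP; rewrite -[RHS]h; ring.
by rewrite -[RHS]h; ring.
Qed.

Lemma L_nzF (P Q : {poly CC}) (u : vec) : quadratic_map P Q -> nzv u -> nzv (Fh P Q u).
Proof.
case/andP => hcop /eqP hmax.
have {}hmax : maxn (size P) (size Q) = 0.+3 := hmax.
have hP : (size P <= 3)%N by rewrite -hmax leq_maxl.
have hQ : (size Q <= 3)%N by rewrite -hmax leq_maxr.
case: u => x y; rewrite /nzv /Fh /=.
have [y0|ny] := eqVneq y 0.
  subst y; move=> nx; have {}nx : x != 0 by move: nx; case: (x != 0) => //; rewrite /= eqxx.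
  have eP : ph P (x,0) = P`_2 * x^+2 by rewrite /ph /=; ring.
  have eQ : ph Q (x,0) = Q`_2 * x^+2 by rewrite /ph /=; ring.
  rewrite eP eQ.
  have hs : (size P == 3%N) || (size Q == 3%N).
    case: (leqP (size P) (size Q)) => h.
      by move: hmax; rewrite (maxn_idPr h) => ->; rewrite eqxx orbT.
    by move: hmax; rewrite (maxn_idPl (ltnW h)) => ->; rewrite eqxx.
  case/orP: hs => /eqP hs.
    have : lead_coef P != 0 by rewrite lead_coef_eq0 -size_poly_eq0 hs.
    by rewrite lead_coefE hs /= => h; rewrite mulf_neq0 // expf_neq0.
  have : lead_coef Q != 0 by rewrite lead_coef_eq0 -size_poly_eq0 hs.
  by rewrite lead_coefE hs /= => h; apply/orP; right; rewrite mulf_neq0 // expf_neq0.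
move=> _.
have eP : ph P (x,y) = y^+2 * P.[x/y] by rewrite horner3 // /ph /=; field.
have eQ : ph Q (x,y) = y^+2 * Q.[x/y] by rewrite horner3 // /ph /=; field.
rewrite eP eQ.
have [hp0|hp0] := eqVneq (P.[x/y]) 0.
  have hr : root P (x/y) by rewrite rootE hp0.
  have hq := coprimep_root hcop hr; apply/orP; right; by rewrite mulf_neq0 // expf_neq0.
by rewrite mulf_neq0 // expf_neq0.
Qed.

Arguments L_nzF {P Q u}.

Lemma prop_ex (a b : vec) : nzv a -> dt b a = 0 -> exists k, b = (k * a.1, k * a.2).
Proof.
case: a b => a1 a2 [b1 b2]; rewrite /nzv /dt /= => /orP [] h e.
  exists (b1 / a1); congr (_, _); first by rewrite divfK.
  have e' : a1 * b2 = b1 * a2 by apply/eqP; rewrite eq_sym -subr_eq0 -e; apply/eqP; ring.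
  by rewrite -[b2](mulKf h) e'; field.
exists (b2 / a2); congr (_, _); last by rewrite divfK.
have e' : a2 * b1 = b2 * a1 by apply/eqP; rewrite -subr_eq0 -e; apply/eqP; ring.
by rewrite -[b1](mulKf h) e'; field.
Qed.

Arguments prop_ex {a b}.

Lemma prop_ex_nz (a : vec) (z : sphere) : nzv a -> dt (hp z) a = 0 ->
  exists2 k, k != 0 & hp z = (k * a.1, k * a.2).
Proof.
move=> ha hd; have [k hk] := prop_ex ha hd; exists k => //.
apply: contraTneq (nzv_hp z) => k0; rewrite hk k0 /nzv /= !mul0r eqxx.
done.
Qed.

Arguments prop_ex_nz {a z}.

Lemma mobE a b c d z : let u := hp z in
  (c*u.1 + d*u.2 != 0 -> mobius a b c d z = Some ((a*u.1+b*u.2)/(c*u.1+d*u.2))) /\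
  (c*u.1 + d*u.2 = 0 -> mobius a b c d z = None).
Proof.
case: z => [x|] /=; rewrite ?mulr1 ?mulr0 ?addr0; split => h; rewrite /= ?h //.
  by rewrite eqxx.
by rewrite eqxx.
Qed.

Lemma cr_lem (p q r s : sphere) (A B C E : vec) :
  nzv A -> nzv B -> nzv C -> nzv E ->
  dt (hp p) A = 0 -> dt (hp q) B = 0 -> dt (hp r) C = 0 -> dt (hp s) E = 0 ->
  dt A B != 0 -> dt C A != 0 -> dt C B != 0 -> dt E B != 0 ->
  cross_ratio_is p q r s (Some (dt E A * dt C B / (dt E B * dt C A))).
Proof.
move=> nA nB nC nE hp_ hq hr hs AB CA CB EB.
exists (A.2 * dt C B), (- A.1 * dt C B), (B.2 * dt C A), (- B.1 * dt C A).
have key : forall z X k, hp z = (k * X.1, k * X.2) -> k != 0 ->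
   (dt X B != 0 -> mobius (A.2 * dt C B) (- A.1 * dt C B) (B.2 * dt C A) (- B.1 * dt C A) z
        = Some (dt X A * dt C B / (dt X B * dt C A))) /\
   (dt X B = 0 -> mobius (A.2 * dt C B) (- A.1 * dt C B) (B.2 * dt C A) (- B.1 * dt C A) z = None).
  move=> z X k hz nk; have [m1 m2] := mobE (A.2 * dt C B) (- A.1 * dt C B) (B.2 * dt C A) (- B.1 * dt C A) z.
  rewrite hz /= in m1 m2.
  have e1 : B.2 * dt C A * (k * X.1) + - B.1 * dt C A * (k * X.2) = k * dt X B * dt C A by rewrite /dt; ring.
  have e2 : A.2 * dt C B * (k * X.1) + - A.1 * dt C B * (k * X.2) = k * dt X A * dt C B by rewrite /dt; ring.
  rewrite e1 e2 in m1 m2; split => h.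
    by rewrite m1 ?mulf_neq0 //; congr Some; field; rewrite ?CA ?CB ?h ?nk.
  by rewrite m2 // h mulr0 mul0r.
split.
  rewrite [X in X != 0](_ : _ = dt A B * dt C A * dt C B); first by rewrite !mulf_neq0.
  by rewrite /dt; ring.
have [k nk hk] := prop_ex_nz nA hp_.
have [k2 nk2 hk2] := prop_ex_nz nB hq.
have [k3 nk3 hk3] := prop_ex_nz nC hr.
have [k4 nk4 hk4] := prop_ex_nz nE hs.
split.
  rewrite (proj1 (key _ _ _ hk nk) AB); congr Some; rewrite /dt; ring.
split; first by apply: (proj2 (key _ _ _ hk2 nk2)); rewrite /dt; ring.
split; last by apply: (proj1 (key _ _ _ hk4 nk4)).
rewrite (proj1 (key _ _ _ hk3 nk3) CB); congr Some; field; by rewrite ?CA ?CB.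
Qed.
Lemma two_neq0 : (2 : CC) != 0.
Proof. by rewrite pnatr_eq0. Qed.

Lemma dtr (b1 b2 X1 X2 Y1 Y2 : CC) : (b1 != 0) || (b2 != 0) ->
  b1*X2 - b2*X1 = 0 -> b1*Y2 - b2*Y1 = 0 -> X1*Y2 - X2*Y1 = 0.
Proof.
move=> /orP [] nz hX hY; apply: (mulfI nz); rewrite mulr0.
  by transitivity (X1 * (b1*Y2 - b2*Y1) - Y1 * (b1*X2 - b2*X1)); [ring | rewrite hX hY !mulr0 subr0].
by transitivity (X2 * (b1*Y2 - b2*Y1) - Y2 * (b1*X2 - b2*X1)); [ring | rewrite hX hY !mulr0 subr0].
Qed.

Lemma nz_of_dt (a b c d : CC) : a*d - b*c != 0 -> (a != 0) || (b != 0).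
Proof.
have [->|//] := eqVneq a 0; have [->|//] := eqVneq b 0.
by rewrite !mul0r subr0 eqxx.
Qed.

Lemma nz_of_dt2 (a b c d : CC) : a*d - b*c != 0 -> (c != 0) || (d != 0).
Proof.
have [->|//] := eqVneq c 0; have [->|//] := eqVneq d 0.
by rewrite !mulr0 subr0 eqxx.
Qed.

Arguments dtr {b1 b2 X1 X2 Y1 Y2}.
Arguments nz_of_dt {a b c d}.
Arguments nz_of_dt2 {a b c d}.

Lemma core (x1 y1 x2 y2 sa ta sb tb : CC) :
  x1*y2 - y1*x2 != 0 ->
  sa*tb - ta*sb != 0 ->
  sb*(x1^+2*y1 + y1^+2*y2) - tb*(x1^+2*x1 + y1^+2*x2) = 0 ->
  sb*(x2^+2*y1 + y2^+2*y2) - tb*(x2^+2*x1 + y2^+2*x2) = 0 ->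
  sa*(sb^+2*y1 + tb^+2*y2) - ta*(sb^+2*x1 + tb^+2*x2) = 0 ->
  sa*(sa^+2*y1 + ta^+2*y2) - ta*(sa^+2*x1 + ta^+2*x2) = 0 ->
  sa*y1 - ta*x1 != 0 /\ sa*y2 - ta*x2 != 0 /\ sb*y2 - tb*x2 != 0 /\
  (let w := (sb*y1 - tb*x1)*(sa*y2 - ta*x2)/((sb*y2 - tb*x2)*(sa*y1 - ta*x1)) in
   (w+1)*(w^+2 - 6*w + 1) = 0).
Proof.
move=> hE h5 h1 h2 h3 h4.
have g1 : x1*y2 + y1*x2 = 0.
  have := dtr (nz_of_dt2 h5) h1 h2.
  have -> : (x1 ^+ 2 * x1 + y1 ^+ 2 * x2) * (x2 ^+ 2 * y1 + y2 ^+ 2 * y2) -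
      (x1 ^+ 2 * y1 + y1 ^+ 2 * y2) * (x2 ^+ 2 * x1 + y2 ^+ 2 * x2)
     = (x1*y2 - y1*x2)^+2 * (x1*y2 + y1*x2) by ring.
  by move/eqP; rewrite mulf_eq0 expf_eq0 (negbTE hE) andbF /= => /eqP.
have g2 : sa*tb + ta*sb = 0.
  have := dtr (nz_of_dt h5) h4 h3.
  have -> : (sa ^+ 2 * x1 + ta ^+ 2 * x2) * (sb ^+ 2 * y1 + tb ^+ 2 * y2) -
     (sa ^+ 2 * y1 + ta ^+ 2 * y2) * (sb ^+ 2 * x1 + tb ^+ 2 * x2)
     = (x1*y2 - y1*x2) * (sa*tb - ta*sb) * (sa*tb + ta*sb) by ring.
  by move/eqP; rewrite !mulf_eq0 (negbTE hE) (negbTE h5) /= => /eqP.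
have ny1 : y1 != 0.
  by apply: contraNneq hE => y0; move: g1; rewrite y0 !mul0r addr0 => /eqP; rewrite mulf_eq0 => /orP [] /eqP ->; rewrite ?mul0r ?mulr0 subr0.
have nta : ta != 0.
  by apply: contraNneq h5 => y0; move: g2; rewrite y0 !mul0r addr0 => /eqP; rewrite mulf_eq0 => /orP [] /eqP ->; rewrite ?mul0r ?mulr0 subr0.
have [m hm] : exists m, x1 = m * y1 by exists (x1 / y1); rewrite divfK.
have [z hz] : exists z, sa = z * ta by exists (sa / ta); rewrite divfK.
subst x1 sa.
have hx2 : x2 = - (m * y2).
  apply: (mulfI ny1); rewrite -[RHS]addr0 -g1; ring.
have hsb : sb = - (z * tb).
  apply: (mulfI nta); rewrite -[RHS]addr0 -g2; ring.
subst x2 sb.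
have ntb : tb != 0 by apply: contraNneq h5 => ->; rewrite !(mul0r, mulr0, oppr0, subr0).
have nz : z != 0 by apply: contraNneq h5 => ->; rewrite !(mul0r, mulr0, oppr0, subr0).
have ny2 : y2 != 0 by apply: contraNneq hE => ->; rewrite !(mul0r, mulr0, oppr0, subr0).
have nm : m != 0 by apply: contraNneq hE => ->; rewrite !(mul0r, mulr0, oppr0, subr0).
have E1 : m^+2*y1*(z+m) + y2*(z-m) = 0.
  have : tb*y1^+2*(m^+2*y1*(z+m) + y2*(z-m)) = 0.
    by rewrite -oppr0 -h1; ring.
  by move/eqP; rewrite !mulf_eq0 (negbTE ntb) (negbTE ny1) /= => /eqP.
have E4 : z^+2*y1*(z-m) + y2*(z+m) = 0.
  have : ta^+3*(z^+2*y1*(z-m) + y2*(z+m)) = 0.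
    by rewrite -h4; ring.
  by move/eqP; rewrite !mulf_eq0 (negbTE nta) /= => /eqP.
have key : (z^+2 - 2*z * m - m^+2)*(z^+2 + m^+2) = 0.
  apply: (mulfI ny1); rewrite mulr0.
  transitivity ((z^+2*y1*(z-m) + y2*(z+m)) * (z - m) - (m^+2*y1*(z+m) + y2*(z-m)) * (z + m)); first ring.
  by rewrite E1 E4 !mul0r subr0.
have zm1 : z - m != 0.
  apply/eqP => e; have ez : z = m by apply/eqP; rewrite -subr_eq0 e.
  move: E1; rewrite ez subrr mulr0 addr0 => /eqP.
  have -> : m ^+ 2 * y1 * (m + m) = 2 * m^+3 * y1 by ring.
  by rewrite !mulf_eq0 (negbTE two_neq0) (negbTE nm) (negbTE ny1).
have zm2 : z + m != 0.
  apply/eqP => e; have ez : z = - m by apply/eqP; rewrite -addr_eq0 e.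
  move: E1; rewrite ez addNr mulr0 add0r => /eqP.
  have -> : y2 * (- m - m) = - (2 * m * y2) by ring.
  by rewrite oppr_eq0 !mulf_eq0 (negbTE two_neq0) (negbTE nm) (negbTE ny2).
have d1 : z * ta * y1 - ta * (m * y1) = ta * y1 * (z - m) by ring.
have d2 : z * ta * y2 - ta * - (m * y2) = ta * y2 * (z + m) by ring.
have d3 : - (z * tb) * y2 - tb * - (m * y2) = - (tb * y2 * (z - m)) by ring.
have d4 : - (z * tb) * y1 - tb * (m * y1) = - (tb * y1 * (z + m)) by ring.
rewrite d1 d2 d3 d4 oppr_eq0 !mulf_neq0 //; split => //; split => //; split => //.
move=> w.
have hw : w = (z + m)^+2 / (z - m)^+2.
  by rewrite /w; field; rewrite zm1 ny1 nta ny2 ntb.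
have : (w+1)*(w^+2 - 6*w + 1) = -8 * ((z^+2 - 2*z * m - m^+2)*(z^+2 + m^+2)) * (z^+2 + 2*z * m - m^+2) / (z - m)^+6.
  by rewrite hw; field.
by rewrite key mulr0 mul0r mul0r.
Qed.

Definition Gh (P Q : {poly CC}) (u v : vec) : vec :=
  (2*P`_0*u.2*v.2 + P`_1*(u.1*v.2+u.2*v.1) + 2*P`_2*u.1*v.1,
   2*Q`_0*u.2*v.2 + Q`_1*(u.1*v.2+u.2*v.1) + 2*Q`_2*u.1*v.1).

Lemma I1 (P Q : {poly CC}) (u v : vec) : dt (Fh P Q u) (Gh P Q u v) = Kh P Q u * dt u v.
Proof. case: u v => [u1 u2] [v1 v2]; rewrite /dt /Fh /Gh /Kh /ph /=; ring. Qed.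

Lemma Gsym (P Q : {poly CC}) (u v : vec) : Gh P Q u v = Gh P Q v u.
Proof. case: u v => [u1 u2] [v1 v2]; rewrite /Gh /=; congr (_, _); ring. Qed.

Lemma I2 (P Q : {poly CC}) (c1 c2 u : vec) :
  (dt c1 c2)^+2 * (Fh P Q u).1 = (dt u c2)^+2 * (Fh P Q c1).1 + (dt c1 u)^+2 * (Fh P Q c2).1
     + dt u c2 * dt c1 u * (Gh P Q c1 c2).1 /\
  (dt c1 c2)^+2 * (Fh P Q u).2 = (dt u c2)^+2 * (Fh P Q c1).2 + (dt c1 u)^+2 * (Fh P Q c2).2
     + dt u c2 * dt c1 u * (Gh P Q c1 c2).2.
Proof. case: c1 c2 u => [a1 a2] [b1 b2] [u1 u2]; rewrite /dt /Fh /Gh /ph /=; split; ring. Qed.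

Lemma I3 (P Q : {poly CC}) (c1 c2 : vec) (s t : CC) :
  Fh P Q (s*c1.1 + t*c2.1, s*c1.2 + t*c2.2) =
  (s^+2*(Fh P Q c1).1 + t^+2*(Fh P Q c2).1 + s*t*(Gh P Q c1 c2).1,
   s^+2*(Fh P Q c1).2 + t^+2*(Fh P Q c2).2 + s*t*(Gh P Q c1 c2).2).
Proof. case: c1 c2 => [a1 a2] [b1 b2]; rewrite /Fh /Gh /ph /=; congr (_, _); ring. Qed.

Lemma dtN (u v : vec) : dt u v = - dt v u.
Proof. rewrite /dt; ring. Qed.

Lemma normal (P Q : {poly CC}) (c1 c2 : vec) : quadratic_map P Q -> dt c1 c2 != 0 ->
  Kh P Q c1 = 0 -> Kh P Q c2 = 0 ->
  dt (Fh P Q c1) (Fh P Q c2) != 0 /\ Gh P Q c1 c2 = (0,0).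
Proof.
move=> hq hD k1 k2.
have n1 : nzv c1 := nz_of_dt hD.
have n2 : nzv c2 := nz_of_dt2 hD.
have nV1 := L_nzF hq n1.
have g1 : dt (Fh P Q c1) (Gh P Q c1 c2) = 0 by rewrite I1 k1 mul0r.
have g2 : dt (Fh P Q c2) (Gh P Q c1 c2) = 0 by rewrite Gsym I1 k2 mul0r.
have [hE|hE] := eqVneq (dt (Fh P Q c1) (Fh P Q c2)) 0; last first.
  split => //.
  move: g1 g2 hE; case: (Fh P Q c1) => a1 a2; case: (Fh P Q c2) => b1 b2.
  case: (Gh P Q c1 c2) => h1 h2; rewrite /dt /= => e1 e2 hE.
  congr (_, _); apply: (mulIf hE); rewrite mul0r.
    transitivity (b1 * (a1*h2 - a2*h1) - a1*(b1*h2 - b2*h1)); first ring.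
    by rewrite e1 e2; ring.
  transitivity (b2 * (a1*h2 - a2*h1) - a2*(b1*h2 - b2*h1)); first ring.
  by rewrite e1 e2; ring.
exfalso.
have f1 : dt (Fh P Q c2) (Fh P Q c1) = 0 by rewrite dtN hE oppr0.
have f2 : dt (Gh P Q c1 c2) (Fh P Q c1) = 0 by rewrite dtN g1 oppr0.
have [mu hmu] := prop_ex nV1 f1.
have [la hla] := prop_ex nV1 f2.
pose r := sqrtc (la^+2 - 4*mu).
have hr : r^+2 = la^+2 - 4*mu := sqr_sqrtc _.
pose s := (r - la)/2.
have hs : s^+2 + mu + la*s = 0.
  have -> : s^+2 + mu + la*s = (r^+2 - la^+2 + 4*mu)/4 by rewrite /s; field.
  by rewrite hr; ring.
have nu : nzv (s*c1.1 + 1*c2.1, s*c1.2 + 1*c2.2).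
  rewrite /nzv /=; have [e1|//] := eqVneq (s*c1.1 + 1*c2.1) 0.
  have [e2|//] := eqVneq (s*c1.2 + 1*c2.2) 0.
  move: hD; rewrite /dt (_ : c1.1 * c2.2 - c1.2 * c2.1 = c1.1 * (s*c1.2 + 1*c2.2) - c1.2 * (s*c1.1 + 1*c2.1)); last by ring.
  by rewrite e1 e2 !mulr0 subr0 eqxx.
have := L_nzF hq nu.
rewrite I3 hmu hla /nzv /=.
have -> : s^+2*(Fh P Q c1).1 + 1^+2*(mu*(Fh P Q c1).1) + s*1*(la*(Fh P Q c1).1) = (s^+2 + mu + la*s)*(Fh P Q c1).1 by ring.
have -> : s^+2*(Fh P Q c1).2 + 1^+2*(mu*(Fh P Q c1).2) + s*1*(la*(Fh P Q c1).2) = (s^+2 + mu + la*s)*(Fh P Q c1).2 by ring.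
by rewrite hs !mul0r eqxx.
Qed.

Lemma LL (c1 c2 u v : vec) : dt u c2 * dt c1 v - dt c1 u * dt v c2 = dt c1 c2 * dt u v.
Proof. rewrite /dt; ring. Qed.

Lemma transfer (P Q : {poly CC}) (c1 c2 b W : vec) : Gh P Q c1 c2 = (0,0) ->
  dt b c2 * ((dt W c2)^+2 * dt c1 (Fh P Q c1) + (dt c1 W)^+2 * dt c1 (Fh P Q c2))
  - dt c1 b * ((dt W c2)^+2 * dt (Fh P Q c1) c2 + (dt c1 W)^+2 * dt (Fh P Q c2) c2)
  = (dt c1 c2)^+3 * dt b (Fh P Q W).
Proof.
move=> hG; have [i1 i2] := I2 P Q c1 c2 W; rewrite hG /= !mulr0 !addr0 in i1 i2.
have -> : dt b c2 * ((dt W c2)^+2 * dt c1 (Fh P Q c1) + (dt c1 W)^+2 * dt c1 (Fh P Q c2))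
  - dt c1 b * ((dt W c2)^+2 * dt (Fh P Q c1) c2 + (dt c1 W)^+2 * dt (Fh P Q c2) c2)
  = dt c1 c2 * (b.1 * ((dt W c2)^+2 * (Fh P Q c1).2 + (dt c1 W)^+2 * (Fh P Q c2).2)
                - b.2 * ((dt W c2)^+2 * (Fh P Q c1).1 + (dt c1 W)^+2 * (Fh P Q c2).1)).
  by rewrite /dt; ring.
rewrite -i1 -i2 /dt /Fh /=; ring.
Qed.

Lemma hp_inj (z z' : sphere) : dt (hp z) (hp z') = 0 -> z = z'.
Proof.
case: z z' => [x|] [y|]; rewrite /dt /= ?mulr1 ?mul1r ?mulr0 ?mul0r ?subr0 ?sub0r //.
- by move/eqP; rewrite subr_eq0 => /eqP ->.
- by move/eqP; rewrite oppr_eq0 oner_eq0.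
- by move/eqP; rewrite oner_eq0.
Qed.

Lemma FhZ (P Q : {poly CC}) (k : CC) (a : vec) :
  Fh P Q (k*a.1, k*a.2) = (k^+2 * (Fh P Q a).1, k^+2 * (Fh P Q a).2).
Proof. rewrite /Fh /ph /=; congr (_, _); ring. Qed.

Lemma prop_F (P Q : {poly CC}) (v : sphere) (V b : vec) : nzv V -> dt (hp v) V = 0 ->
  dt b (Fh P Q (hp v)) = 0 -> dt b (Fh P Q V) = 0.
Proof.
move=> nV hv; have [k nk ->] := prop_ex_nz nV hv; rewrite FhZ.
have -> : dt b (k ^+ 2 * (Fh P Q V).1, k ^+ 2 * (Fh P Q V).2) = k^+2 * dt b (Fh P Q V) by rewrite /dt /=; ring.
by move/eqP; rewrite mulf_eq0 expf_eq0 (negbTE nk) andbF /= => /eqP.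
Qed.

Lemma vals (w : CC) : (w+1)*(w^+2 - 6*w + 1) = 0 ->
  w = - 1 \/ w = ((3 + 2 * Num.sqrt (2 : Rdefinitions.R))%:C%C) \/
  w = ((3 - 2 * Num.sqrt (2 : Rdefinitions.R))%:C%C).
Proof.
set s := (Num.sqrt (2 : Rdefinitions.R))%:C%C.
have hs : s^+2 = 2.
  rewrite /s -rmorphXn sqr_sqrtr ?ler0n //.
  by rewrite rmorph_nat.
have -> : ((3 + 2 * Num.sqrt (2 : Rdefinitions.R))%:C%C) = 3 + 2 * s.
  by rewrite rmorphD rmorphM !rmorph_nat.
have -> : ((3 - 2 * Num.sqrt (2 : Rdefinitions.R))%:C%C) = 3 - 2 * s.
  by rewrite rmorphB rmorphM !rmorph_nat.
have -> : w^+2 - 6*w + 1 = (w - (3 + 2*s)) * (w - (3 - 2*s)).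
  by apply/eqP; rewrite -subr_eq0; apply/eqP; transitivity (4 * (s^+2 - 2)); [ring | rewrite hs subrr mulr0].
move/eqP; rewrite !mulf_eq0 => /orP [/eqP h|/orP [] /eqP h].
- by left; apply/eqP; rewrite -addr_eq0 h.
- by right; left; apply/eqP; rewrite -subr_eq0 h.
- by right; right; apply/eqP; rewrite -subr_eq0 h.
Qed.

Arguments normal {P Q c1 c2}.
Arguments transfer {P Q c1 c2}.
Arguments prop_F {P Q v V b}.
Arguments core {x1 y1 x2 y2 sa ta sb tb}.

Theorem mainTheorem18 (P Q : {poly CC}) (c1 c2 v1 v2 alpha beta : sphere) :
  quadratic_map P Q ->
  is_critical P Q c1 -> is_critical P Q c2 -> c1 <> c2 ->
  rat_eval P Q c1 = v1 -> rat_eval P Q c2 = v2 ->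
  rat_eval P Q v1 = beta -> rat_eval P Q v2 = beta ->
  rat_eval P Q beta = alpha -> rat_eval P Q alpha = alpha ->
  alpha <> beta ->
  exists w : sphere, cross_ratio_is v1 v2 alpha beta w /\
    (w = Some (- 1) \/
     w = Some ((3 + 2 * Num.sqrt (2 : Rdefinitions.R))%:C%C) \/
     w = Some ((3 - 2 * Num.sqrt (2 : Rdefinitions.R))%:C%C)).
Proof.
move=> hq cr1 cr2 hc12 e1 e2 e3 e4 e5 e6 hab.
have hq' := hq; case/andP: hq' => _ /eqP hmax.
have {}hmax : maxn (size P) (size Q) = 0.+3 := hmax.
have hP : (size P <= 3)%N by rewrite -hmax leq_maxl.
have hQ : (size Q <= 3)%N by rewrite -hmax leq_maxr.
have hD : dt (hp c1) (hp c2) != 0 by apply/eqP => h; apply: hc12; exact: hp_inj h.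
have K1 := L_crit P Q c1 hP hQ cr1.
have K2 := L_crit P Q c2 hP hQ cr2.
have [hE hG] := normal hq hD K1 K2.
have nV1 : nzv (Fh P Q (hp c1)) := L_nzF hq (nzv_hp c1).
have nV2 : nzv (Fh P Q (hp c2)) := L_nzF hq (nzv_hp c2).
have r1 : dt (hp v1) (Fh P Q (hp c1)) = 0 by have := L_rat P Q c1 hP hQ; rewrite e1.
have r2 : dt (hp v2) (Fh P Q (hp c2)) = 0 by have := L_rat P Q c2 hP hQ; rewrite e2.
have b1 : dt (hp beta) (Fh P Q (Fh P Q (hp c1))) = 0.
  by apply: (prop_F nV1 r1); have := L_rat P Q v1 hP hQ; rewrite e3.
have b2 : dt (hp beta) (Fh P Q (Fh P Q (hp c2))) = 0.
  by apply: (prop_F nV2 r2); have := L_rat P Q v2 hP hQ; rewrite e4.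
have a1 : dt (hp alpha) (Fh P Q (hp beta)) = 0 by have := L_rat P Q beta hP hQ; rewrite e5.
have a2 : dt (hp alpha) (Fh P Q (hp alpha)) = 0 by have := L_rat P Q alpha hP hQ; rewrite e6.
have hab' : dt (hp alpha) (hp beta) != 0 by apply/eqP => h; apply: hab; exact: hp_inj h.
set C1 := hp c1 in hD K1 K2 hE hG nV1 nV2 r1 r2 b1 b2.
set C2 := hp c2 in hD K1 K2 hE hG nV1 nV2 r1 r2 b1 b2.
set V1 := Fh P Q C1 in hE nV1 r1 b1.
set V2 := Fh P Q C2 in hE nV2 r2 b2.
set A := hp alpha in a1 a2 hab'.
set B := hp beta in a1 b1 b2 hab'.
have hE' : dt V1 C2 * dt C1 V2 - dt C1 V1 * dt V2 C2 != 0 by rewrite LL mulf_neq0.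
have h5' : dt A C2 * dt C1 B - dt C1 A * dt B C2 != 0 by rewrite LL mulf_neq0.
have h1' := transfer B V1 hG; rewrite b1 mulr0 in h1'.
have h2' := transfer B V2 hG; rewrite b2 mulr0 in h2'.
have h3' := transfer A B hG; rewrite a1 mulr0 in h3'.
have h4' := transfer A A hG; rewrite a2 mulr0 in h4'.
have [d1 [d2 [d3 hw]]] := core hE' h5' h1' h2' h3' h4'.
rewrite !LL in d1 d2 d3 hw.
rewrite !mulf_eq0 negb_or (negbTE hD) /= in d1 d2 d3.
have ew : dt C1 C2 * dt B V1 * (dt C1 C2 * dt A V2) / (dt C1 C2 * dt B V2 * (dt C1 C2 * dt A V1))
   = dt B V1 * dt A V2 / (dt B V2 * dt A V1).
  by field; rewrite ?hD ?d1 ?d3.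
rewrite /= ew in hw.
exists (Some (dt B V1 * dt A V2 / (dt B V2 * dt A V1))); split.
  apply: cr_lem => //; try exact: nzv_hp.
    by rewrite /dt; ring.
  by rewrite /dt; ring.
by case: (vals _ hw) => [->|[->|->]]; [left | right; left | right; right].
Qed.
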